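(* There is an absolute constant $C$ such that the following holds. In the negative-fill variable-processor cup game on $n$ cups against a greedy emptier, let $k,m$ be positive integers with $4k\mid m$ and $m\le n$, and suppose that currently at least $m$ cups have fill exactly $0$. Then the filler can ensure that after at most $Ck^3$ rounds at least $m/4$ cups have fill exactly $k/2$.
   Context: Negative-fill variable-processor cup game: real fills; each round the filler chooses an integer $1\le p\le n$ and reals $a_i\in[0,1]$ with $\sum a_i=p$ and adds $a_i$ to cup $i$; then the emptier chooses $p$ distinct cups and subtracts exactly $1$ from each (fills may become negative). The greedy emptier subtracts from the $p$ fullest cups after the filler's move. *)

(* Defs.v *)
From HB Require Import structures.
From mathcomp Require Import all_boot all_order all_algebra.
From mathcomp Require Import reals.
Set Implicit Arguments. Unset Strict Implicit. Unset Printing Implicit Defensive.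
Import Order.TTheory GRing.Theory Num.Theory.
Local Open Scope ring_scope.

Section CupGame.
Variables (R : realType) (n : nat).

Definition filler_move (p : nat) (a : 'I_n -> R) : Prop :=
  [/\ (0 < p)%N, (p <= n)%N, (forall i, 0 <= a i <= 1) & \sum_(i < n) a i = p%:R].

Definition greedy_choice (g : 'I_n -> R) (p : nat) (S : {set 'I_n}) : Prop :=
  #|S| = p /\ (forall i j, i \in S -> j \notin S -> g j <= g i).

(* Fills may become negative. *)
Fixpoint can_ensure (goal : ('I_n -> R) -> Prop) (t : nat) (f : 'I_n -> R)
    : Prop :=
  match t with
  | 0 => goal f
  | t'.+1 => goal f \/
      exists p (a : 'I_n -> R), filler_move p a /\
        forall S, greedy_choice (fun i => f i + a i) p S ->
          can_ensure goal t' (fun i => f i + a i - (i \in S)%:R)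
  end.

Definition count_fill (f : 'I_n -> R) (x : R) : nat := #|[set i | f i == x]|.

End CupGame.

(* Main.v *)
Require Import Defs.
From HB Require Import structures.
From mathcomp Require Import all_boot all_order all_algebra.
From mathcomp Require Import reals.
From mathcomp Require Import zify ring lra.
Import Order.TTheory GRing.Theory Num.Theory.

Definition fire (c : nat -> nat) (i : nat) : nat -> nat :=
  fun j => if j == i then c i - 2 else if (j == i.-1) || (j == i.+1) then c j + 1 else c j.

Lemma sum_delta (G : nat -> nat) a N : a < N -> \sum_(0 <= j < N) G j * (j == a) = G a.
Proof.
elim: N => [//|N IH] h; rewrite big_nat_recr //=.
case: (ltngtP a N) => [lt|gt|->].
- by rewrite IH // muln0 addn0.
- lia.
- rewrite muln1 big1_seq ?add0n // => j; rewrite mem_iota => /andP [_ hj].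
  have -> : (j == N) = false by lia. by rewrite muln0.
Qed.

Lemma fire_sum (F : nat -> nat) c i N : 0 < i -> i.+1 < N -> 1 < c i ->
  \sum_(0 <= j < N) F j * fire c i j + 2 * F i =
  \sum_(0 <= j < N) F j * c j + F i.-1 + F i.+1.
Proof.
move=> i0 iN ci.
have pw : forall j, F j * fire c i j + 2 * F j * (j == i) =
   F j * c j + F j * (j == i.-1) + F j * (j == i.+1).
  move=> j; rewrite /fire.
  case: (eqVneq j i) => [->|ne].
    have -> : (i == i.-1) = false by lia.
    have -> : (i == i.+1) = false by lia.
    by rewrite !muln0 !addn0 muln1 mulnBr [2 * _]mulnC subnK // leq_mul2l ci orbT.
  rewrite muln0 addn0.
  case: (eqVneq j i.-1) => [->|ne1] /=.
    have -> : (i.-1 == i.+1) = false by lia.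
    by rewrite muln0 addn0 muln1 mulnDr muln1.
  case: (eqVneq j i.+1) => [->|ne2] /=.
    by rewrite muln0 addn0 muln1 mulnDr muln1.
  by rewrite !muln0 !addn0.
have E : \sum_(0 <= j < N) (F j * fire c i j + 2 * F j * (j == i)) =
  \sum_(0 <= j < N) (F j * c j + F j * (j == i.-1) + F j * (j == i.+1)).
  by apply: eq_bigr => j _; exact: pw.
rewrite !big_split !(sum_delta (fun j => 2 * F j)) ?sum_delta in E; try lia; exact E.
Qed.

Lemma sum_id N : 2 * \sum_(0 <= i < N) i = N * N.-1.
Proof.
elim: N => [|N IH]; first by rewrite big_nil.
rewrite big_nat_recr //= mulnDr IH; case: N {IH} => [//|N] /=; lia.
Qed.

Lemma stable k c : 0 < k -> (forall i, 0 < i < 3 * k -> c i <= 1) ->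
  \sum_(0 <= i < (3 * k).+1) i * c i = 8 * k * k -> k <= c (3 * k).
Proof.
move=> k0 Hc Hm.
have le : \sum_(0 <= i < 3 * k) i * c i <= \sum_(0 <= i < 3 * k) i.
  rewrite [X in X <= _]big_seq [X in _ <= X]big_seq; apply: leq_sum => i.
  rewrite mem_iota => /andP [_ hi]; have {}hi : i < 3 * k by lia.
  case: i hi => [//|i] hi; have := Hc i.+1; rewrite ltn0Sn hi => /(_ isT) h.
  by rewrite -[X in _ <= X]muln1 leq_mul2l h orbT.
have := sum_id (3 * k); move: Hm; rewrite big_nat_recr //=.
set X := \sum_(0 <= i < 3 * k) i * c i; move: le; rewrite -/X.
set Y := \sum_(0 <= i < 3 * k) i.
move=> h1 h2 h3; rewrite leqNgt; apply/negP => h4.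
have : 3 * k * c (3 * k) <= 3 * k * (k - 1) by rewrite leq_mul2l; lia.
nia.
Qed.

Lemma pot_bound c N : \sum_(0 <= i < N.+1) i * i * c i <= N * N * \sum_(0 <= i < N.+1) c i.
Proof.
rewrite bigop.big_distrr /= [X in X <= _]big_seq [X in _ <= X]big_seq; apply: leq_sum => i.
rewrite mem_iota => /andP [_ hi]; have {}hi : i < N.+1 by lia.
have iN : i <= N by lia. by rewrite leq_mul2r leq_mul ?orbT.
Qed.

Lemma fire_sum1 c i N : 0 < i -> i.+1 < N -> 1 < c i ->
  \sum_(0 <= j < N) fire c i j = \sum_(0 <= j < N) c j.
Proof.
move=> i0 iN ci; have := fire_sum (fun=> 1) c i N i0 iN ci.
rewrite !(eq_bigr _ (fun j _ => mul1n _)) => /eqP.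
by rewrite -addnA eqn_add2r => /eqP.
Qed.

Lemma fire_mom c i N : 0 < i -> i.+1 < N -> 1 < c i ->
  \sum_(0 <= j < N) j * fire c i j = \sum_(0 <= j < N) j * c j.
Proof.
move=> i0 iN ci; have := fire_sum id c i N i0 iN ci => /eqP.
rewrite -[_ + i.-1 + _]addnA.
have -> : i.-1 + i.+1 = 2 * i by lia.
by rewrite eqn_add2r => /eqP.
Qed.

Lemma fire_pot c i N : 0 < i -> i.+1 < N -> 1 < c i ->
  \sum_(0 <= j < N) j * j * fire c i j = \sum_(0 <= j < N) j * j * c j + 2.
Proof.
move=> i0 iN ci; have := fire_sum (fun j => j * j) c i N i0 iN ci => /eqP.
rewrite -[_ + i.-1 * i.-1 + _]addnA.
have -> : i.-1 * i.-1 + i.+1 * i.+1 = 2 * (i * i) + 2.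
  by case: i i0 {iN ci} => [//|i] _ /=; lia.
by rewrite [X in _ == X]addnCA [X in X == _]addnC eqn_add2l => /eqP.
Qed.

Local Open Scope ring_scope.

Section Step.
Variables (R : realType) (n : nat).

Lemma sum_ind (A : {set 'I_n}) : \sum_(i < n) ((i \in A) : nat)%:R = (#|A|%:R : R).
Proof.
rewrite -natr_sum; congr (_ %:R).
rewrite -sum1_card [in RHS]big_mkcond /=; apply eq_bigr => i _; by case: (i \in A).
Qed.

Lemma subset_card (A : {set 'I_n}) j : (j <= #|A|)%N -> exists B : {set 'I_n}, B \subset A /\ #|B| = j.
Proof.
elim: j => [|j IH] hj; first by exists set0; rewrite sub0set cards0.
have [B [sBA cB]] := IH (ltnW hj).
have : (0 < #|A :\: B|)%N by rewrite cardsD (setIidPr sBA) cB; lia.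
case/card_gt0P => x; rewrite in_setD => /andP [xB xA].
exists (x |: B); split; first by rewrite subUset sub1set xA sBA.
by rewrite cardsU1 xB cB.
Qed.

Lemma step (goal : ('I_n -> R) -> Prop) t (f : 'I_n -> R) (x : R) (s : nat)
  (T : {set 'I_n}) :
  (0 < s)%N -> #|T| = (2 * s)%N -> (forall i, i \in T -> f i = x) ->
  (forall g : 'I_n -> R,
     (forall y, y != x -> (count_fill f y <= count_fill g y)%N) ->
     (count_fill f (x + 1/2) + s <= count_fill g (x + 1/2))%N ->
     (count_fill f (x - 1/2) + s <= count_fill g (x - 1/2))%N ->
     (count_fill f x <= count_fill g x + 2 * s)%N ->
     can_ensure goal t g) ->
  can_ensure goal t.+1 f.
Proof.
move=> s0 cT fT H; right.
set P := [set i | x < f i].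
have Pin : forall i, (i \in P) = (x < f i) by move=> i; rewrite inE.
clearbody P.
have PT : forall i, i \in T -> i \notin P.
  by move=> i /fT fi; rewrite Pin fi ltxx.
set a := fun i : 'I_n => ((i \in P) : nat)%:R + ((i \in T) : nat)%:R / 2 : R.
have aP : forall i, i \in P -> a i = 1.
  move=> i iP; have iT : i \notin T by apply/negP => /PT; rewrite iP.
  by rewrite /a iP (negbTE iT) /= mul0r addr0.
have aT : forall i, i \in T -> a i = 1/2.
  by move=> i iT; rewrite /a iT (negbTE (PT _ iT)) /= add0r.
have aO : forall i, i \notin P -> i \notin T -> a i = 0.
  by move=> i iP iT; rewrite /a (negbTE iP) (negbTE iT) /= mul0r addr0.
have disjPT : [disjoint P & T].
  by rewrite -setI_eq0; apply/eqP/setP => i; rewrite !inE; apply/andP => -[iP /PT]; rewrite iP.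
have cPT : #|P :|: T| = (#|P| + #|T|)%N.
  by rewrite cardsU (disjoint_setI0 disjPT) cards0 subn0.
exists (#|P| + s)%N, a; split.
  split.
  - lia.
  - have := max_card (mem (P :|: T)); rewrite card_ord cPT cT; lia.
  - move=> i; case: (boolP (i \in P)) => iP; first by rewrite aP // ler01 lexx.
    case: (boolP (i \in T)) => iT; first by rewrite aT //; apply/andP; split; lra.
    by rewrite aO // lexx ler01.
  - rewrite /a big_split /= -mulr_suml !sum_ind cT natrD natrM.
    lra.
move=> S [cS gS].
pose g0 := fun i => f i + a i.
have g0P : forall i, i \in P -> x + 1 < g0 i.
  by move=> i iP; rewrite /g0 aP //; move: iP; rewrite Pin => h; lra.
have g0T : forall i, i \in T -> g0 i = x + 1/2.
  by move=> i iT; rewrite /g0 aT // fT.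
have g0O : forall i, i \notin P -> i \notin T -> g0 i <= x.
  by move=> i iP iT; rewrite /g0 aO // addr0; move: iP; rewrite Pin -leNgt.
have g0le : forall i, i \notin P -> g0 i <= x + 1/2.
  move=> i iP; case: (boolP (i \in T)) => iT; first by rewrite g0T.
  by have := g0O _ iP iT; lra.
have PS : P \subset S.
  apply/subsetP => j jP; apply/negPn/negP => jS.
  have : S \subset P :\ j.
    apply/subsetP => i iS; rewrite !inE; apply/andP; split.
      by apply/negP => /eqP ij; move: iS; rewrite ij (negbTE jS).
    apply/negPn/negP => iP.
    have := gS i j iS jS; have := g0P j jP; have := g0le i iP; rewrite /g0; lra.
  move/subset_leq_card; by rewrite cS (cardsD1 j P) jP /= -addnA add1n ltnNge leq_addr.
have SPT : S \subset P :|: T.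
  apply/subsetP => i iS; rewrite inE; apply/negPn/negP; rewrite negb_or => /andP [iP iT].
  have TS : T \subset S.
    apply/subsetP => j jT; apply/negPn/negP => jS.
    have := gS i j iS jS; rewrite -/(g0 j) g0T //; have := g0O _ iP iT; rewrite /g0; lra.
  have : i |: (P :|: T) \subset S by rewrite subUset sub1set iS subUset PS TS.
  move/subset_leq_card; rewrite cardsU1 inE negb_or iP iT cPT cS cT; lia.
have cST : #|S :&: T| = s.
  have eS : S = P :|: (S :&: T).
    apply/setP => i; rewrite !inE; case: (boolP (i \in P)) => iP /=.
      by rewrite (subsetP PS).
    case: (boolP (i \in S)) => iS //=.
    by have := subsetP SPT i iS; rewrite inE (negbTE iP).
  move: cS; rewrite {1}eS cardsU.
  have -> : P :&: (S :&: T) = set0.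
    apply/setP => i; rewrite !inE; apply/negP => /and3P [iP _ /PT]; by rewrite iP.
  by rewrite cards0 subn0 => /eqP; rewrite eqn_add2l => /eqP.
pose g := fun i => f i + a i - ((i \in S) : nat)%:R.
have gN : forall i, i \notin T -> g i = f i.
  move=> i iT; rewrite /g; case: (boolP (i \in P)) => iP.
    rewrite aP // (subsetP PS) //=; lra.
  rewrite aO //; case: (boolP (i \in S)) => iS; last by rewrite /= subr0 addr0.
  by have := subsetP SPT i iS; rewrite inE (negbTE iP) (negbTE iT).
have gTS : forall i, i \in T -> i \in S -> g i = x - 1/2.
  by move=> i iT iS; rewrite /g aT // fT // iS /=; lra.
have gTN : forall i, i \in T -> i \notin S -> g i = x + 1/2.
  by move=> i iT iS; rewrite /g aT // fT // (negbTE iS) /= subr0.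
apply: (H g).
- move=> y yx; apply: subset_leq_card; apply/subsetP => i; rewrite !inE => /eqP fi.
  have iT : i \notin T by apply/negP => /fT; rewrite fi => yx'; rewrite yx' eqxx in yx.
  by rewrite gN // fi.
- rewrite /count_fill.
  have dis : [set i | f i == x + 1/2] :&: (T :\: S) = set0.
    apply/setP => i; rewrite !inE; apply/negP => /and3P [/eqP fi _ /fT]; rewrite fi; lra.
  have := subset_leq_card (_ : [set i | f i == x + 1/2] :|: (T :\: S) \subset [set i | g i == x + 1/2]).
  rewrite cardsU dis cards0 subn0 cardsD setIC cST cT.
  have -> : (2 * s - s = s)%N by lia.
  apply; apply/subsetP => i; rewrite !inE => /orP [/eqP fi|/andP [iS iT]].
    have iT : i \notin T by apply/negP => /fT; rewrite fi; lra.
    by rewrite gN // fi.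
  by rewrite gTN.
- rewrite /count_fill.
  have dis : [set i | f i == x - 1/2] :&: (T :&: S) = set0.
    apply/setP => i; rewrite !inE; apply/negP => /and3P [/eqP fi /fT]; rewrite fi; lra.
  have := subset_leq_card (_ : [set i | f i == x - 1/2] :|: (T :&: S) \subset [set i | g i == x - 1/2]).
  rewrite cardsU dis cards0 subn0 setIC cST.
  apply; apply/subsetP => i; rewrite !inE => /orP [/eqP fi|/andP [iT iS]].
    have iT : i \notin T by apply/negP => /fT; rewrite fi; lra.
    by rewrite gN // fi.
  by rewrite gTS.
- rewrite /count_fill -cT.
  have := subset_leq_card (_ : [set i | f i == x] \subset [set i | g i == x] :|: T).
  move=> h; apply: (leq_trans (h _)); first last.
    by rewrite cardsU leq_subr.
  apply/subsetP => i; rewrite !inE => /eqP fi.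
  case: (boolP (i \in T)) => iT; first by rewrite orbT.
  by rewrite gN // fi eqxx.
Qed.

End Step.

Theorem lemma5p4 :
  exists C : nat, forall (R : realType) (n k m : nat) (f : 'I_n -> R),
    (0 < k)%N -> (0 < m)%N -> (4 * k %| m)%N -> (m <= n)%N ->
    (m <= count_fill f 0)%N ->
    can_ensure (fun g => (m <= 4 * count_fill g (k%:R / 2))%N) (C * k ^ 3) f.
Proof.
exists 11%N => R n k m f k0 m0 dvd mn cnt.
set s := (m %/ (4 * k))%N.
have ms : m = (s * (4 * k))%N by rewrite divnK.
have s0 : (0 < s)%N by move: m0; rewrite ms; case: (s) => //.
set goal := fun g : 'I_n -> R => (m <= 4 * count_fill g (k%:R / 2))%N.
pose lvl := fun i : nat => ((i%:R - (2 * k)%:R) / 2 : R).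
have lvlS : forall i, lvl i.+1 = lvl i + 1/2.
  by move=> i; rewrite /lvl -addn1 natrD; lra.
have lvlP : forall i, (0 < i)%N -> lvl i.-1 = lvl i - 1/2.
  by move=> i i0; rewrite -{2}(prednK i0) lvlS; lra.
have lvl_inj : forall i j, lvl i = lvl j -> i = j.
  move=> i j; rewrite /lvl => h; apply/eqP; rewrite -(eqr_nat R); apply/eqP; lra.
have lvlW : lvl (3 * k)%N = k%:R / 2 by rewrite /lvl !natrM; lra.
have lvl0 : lvl (2 * k)%N = 0 by rewrite /lvl subrr mul0r.
set W := (3 * k)%N.
have claim : forall t (g : 'I_n -> R) (c : nat -> nat),
  (\sum_(0 <= i < W.+1) c i = 4 * k)%N ->
  (\sum_(0 <= i < W.+1) i * c i = 8 * k * k)%N ->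
  (forall i, i < W.+1 -> s * c i <= count_fill g (lvl i))%N ->
  (36 * k ^ 3 < \sum_(0 <= i < W.+1) i * i * c i + 2 * t)%N ->
  can_ensure goal t g.
  elim=> [|t IH] g c Hs Hm Hr Hp.
    have := pot_bound c W; rewrite Hs /W; move: Hp; rewrite addn0 /W; nia.
  case: (leqP k (c W)) => hk.
    left; rewrite /goal -lvlW.
    have h1 := Hr W (ltnSn W).
    have h2 : (s * k <= s * c W)%N by rewrite leq_mul2l hk orbT.
    rewrite ms mulnCA -/W; lia.
  have [i /andP [/andP [i0 iW] ci]] : exists i, ((0 < i < W) && (1 < c i))%N.
    case: (boolP [exists i : 'I_W, (0 < i)%N && (1 < c i)%N]) => [/existsP [i hi]|/existsPn hn].
      by exists i; rewrite ltn_ord andbT.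
    exfalso; have : (k <= c W)%N.
      apply: stable => // j /andP [j0 jW]; have := hn (Ordinal jW); rewrite /= j0 /= -leqNgt; exact.
    by rewrite leqNgt hk.
  have iW' : (i.+1 < W.+1)%N by [].
  have cnt2 : (2 * s <= #|[set j | g j == lvl i]|)%N.
    have := Hr i (ltnW iW'); rewrite /count_fill => h; apply: leq_trans h.
    by rewrite mulnC leq_mul2l ci orbT.
  have [T [sT cT]] := @subset_card n _ _ cnt2.
  apply: (@step R n goal t g (lvl i) s T s0 cT).
    by move=> j /(subsetP sT); rewrite inE => /eqP.
  move=> g' ha hb hc hd; apply: (IH g' (fire c i)).
  - by rewrite fire_sum1.
  - by rewrite fire_mom.
  - move=> j jW; rewrite /fire.
    case: (eqVneq j i) => [->|nji].
      have := Hr i (ltnW iW'); rewrite mulnBr; lia.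
    case: (eqVneq j i.-1) => [->|nj1] /=.
      rewrite lvlP // mulnDr muln1; have := Hr i.-1 (leq_ltn_trans (leq_pred i) (ltnW iW')); rewrite lvlP //; lia.
    case: (eqVneq j i.+1) => [->|nj2] /=.
      rewrite lvlS mulnDr muln1; have := Hr i.+1 iW'; rewrite lvlS; lia.
    apply: leq_trans (Hr j jW) _; apply: ha; apply/eqP => /lvl_inj; exact/eqP.
  - rewrite fire_pot //; lia.
apply: (claim _ f (fun j => 4 * k * (j == 2 * k)))%N.
- by rewrite (sum_delta (fun=> 4 * k)%N) //; rewrite /W; lia.
- under eq_bigr do rewrite mulnA.
  by rewrite (sum_delta (fun j => j * (4 * k)))%N /W; lia.
- move=> j jW; case: (eqVneq j (2 * k)%N) => [->|nj] /=.
    by rewrite lvl0 muln1 -ms.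
  by rewrite !muln0.
- under eq_bigr do rewrite mulnA.
  rewrite (sum_delta (fun j => j * j * (4 * k)))%N /W; first nia. lia.
Qed.
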